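(* Let $\Delta$ be a reflexive $4$-polytope, and let $\Sigma,\Sigma'$ be projective $\Delta$-maximal fans related by a wall crossing, with associated oriented circuit $W_+=\{\nu_i: i\in J_+\}$, $W_-=\{\nu_i:i\in J_-\}$. If $|J_+\cup J_-|=4$, then there is a $\mathbb{Z}$-linear isomorphism $N\cong\mathbb{Z}^4$ under which $W_+=\{e_1,e_2\}$ and $W_-=\{e_3,\,e_1+e_2-e_3\}$, where $e_1,\dots,e_4$ is the standard basis.
   Context: $N\cong\mathbb{Z}^4$ is a lattice with dual $M$. A lattice polytope $\Delta\subseteq N_\mathbb{R}$ with the origin in its interior is reflexive if $\Delta^*=\{m\in M_\mathbb{R}:\langle m,n\rangle\ge -1\ \forall n\in\Delta\}$ is a lattice polytope. A fan $\Sigma$ in $N_\mathbb{R}$ is $\Delta$-maximal if its set of rays equals the set of rays through the nonzero lattice points of $\Delta$ and $\Sigma$ is complete and simplicial. Let $\nu_1,\dots,\nu_r$ be the lattice points of $\partial\Delta$, and consider the secondary (GKZ) fan of $\nu_1,\dots,\nu_r$; projective $\Delta$-maximal fans correspond exactly to the maximal cones $\Gamma_{\Sigma,\emptyset}$ of its moving cone. $\Sigma$ and $\Sigma'$ are related by a wall crossing if $\Gamma_{\Sigma,\emptyset}$ and $\Gamma_{\Sigma',\emptyset}$ are distinct and share a common codimension-one face $\Gamma_{\Sigma_0,\emptyset}$. In that case there are disjoint $J_+,J_-\subseteq\{1,\dots,r\}$, each of size at least $2$, and a relation $\sum_{i\in J_+}b_i\nu_i+\sum_{i\in J_-}b_i\nu_i=0$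 with integers $b_i>0$ for $i\in J_+$ and $b_i<0$ for $i\in J_-$, such that $\{\nu_i: i\in J_+\cup J_-\}$ is a circuit (linearly dependent, every proper subset independent); after relabeling $\Sigma,\Sigma'$, $\mathrm{Cone}(\nu_i:i\in J_+)\in\Sigma$ and $\mathrm{Cone}(\nu_i:i\in J_-)\in\Sigma'$; and every maximal non-simplicial cone of $\Sigma_0$ is $\mathrm{Cone}(\nu_i: i\in J_+\cup J_0\cup J_-)$ for some $J_0$ with $|J_+\cup J_0\cup J_-|=5$, on which $\Sigma$ restricts to the fan of faces of the cones $\mathrm{Cone}(W\setminus\{w\})$, $w\in W_-$, and $\Sigma'$ to the fan of faces of $\mathrm{Cone}(W\setminus\{w\})$, $w\in W_+$, where $W=\{\nu_i:i\in J_+\cup J_0\cup J_-\}$; $\Sigma$ and $\Sigma'$ coincide outside these cones. *)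

(* Defs.v *)
(* N = Z^4 is modelled by row vectors 'rV[int]_4, N_R by
   'rV[R]_4 for an arbitrary real (ordered) field R, and the pairing
   M x N -> Z by the dot product. *)
From HB Require Import structures.
From mathcomp Require Import all_boot all_order all_algebra.
Set Implicit Arguments. Unset Strict Implicit. Unset Printing Implicit Defensive.
Import Order.TTheory GRing.Theory Num.Theory.
Local Open Scope ring_scope.

Definition vR (R : realFieldType) (v : 'rV[int]_4) : 'rV[R]_4 :=
  map_mx (fun z : int => z%:~R) v.

Definition dot (R : realFieldType) (n : nat) (u v : 'rV[R]_n) : R :=
  \sum_(j < n) u 0 j * v 0 j.

Definition in_conv (R : realFieldType) (k : nat) (V : 'I_k -> 'rV[int]_4)
  (x : 'rV[R]_4) : Prop :=
  exists a : 'I_k -> R, (forall j, 0 <= a j) /\ \sum_j a j = 1 /\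
    x = \sum_j a j *: vR R (V j).

Definition interior_pt (R : realFieldType) (k : nat) (V : 'I_k -> 'rV[int]_4)
  (x : 'rV[R]_4) : Prop :=
  exists eps : R, 0 < eps /\
    forall y : 'rV[R]_4, (forall j, `|y 0 j - x 0 j| < eps) -> in_conv V y.

Definition in_dual (R : realFieldType) (k : nat) (V : 'I_k -> 'rV[int]_4)
  (m : 'rV[R]_4) : Prop :=
  forall n, in_conv V n -> -1 <= dot m n.

Definition reflexive_polytope (R : realFieldType) (k : nat) (V : 'I_k -> 'rV[int]_4) : Prop :=
  interior_pt V (0 : 'rV[R]_4) /\
  exists (k' : nat) (U : 'I_k' -> 'rV[int]_4),
    forall m : 'rV[R]_4, in_dual V m <-> in_conv U m.

Definition boundary_enum (R : realFieldType) (k : nat) (V : 'I_k -> 'rV[int]_4)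
  (r : nat) (nu : 'I_r -> 'rV[int]_4) : Prop :=
  injective nu /\
  forall v : 'rV[int]_4,
    (in_conv V (vR R v) /\ ~ interior_pt V (vR R v)) <-> exists i, nu i = v.

Definition in_cone (R : realFieldType) (r : nat) (nu : 'I_r -> 'rV[int]_4)
  (S : {set 'I_r}) (x : 'rV[R]_4) : Prop :=
  exists a : 'I_r -> R, (forall i, 0 <= a i) /\
    x = \sum_(i in S) a i *: vR R (nu i).

Definition cone_sub (R : realFieldType) (r : nat) (nu : 'I_r -> 'rV[int]_4)
  (S T : {set 'I_r}) : Prop :=
  forall x : 'rV[R]_4, in_cone nu S x -> in_cone nu T x.

Definition lin_indep (R : realFieldType) (r : nat) (nu : 'I_r -> 'rV[int]_4)
  (S : {set 'I_r}) : Prop :=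
  forall c : 'I_r -> R, \sum_(i in S) c i *: vR R (nu i) = 0 ->
    forall i, i \in S -> c i = 0.

(* A simplicial fan whose rays are among the rays through the nu_i is encoded
   by the family of index sets S such that Cone(nu_i : i in S) is a cone of
   the fan (its rays being the nu_i, i in S). *)
Definition complete_simplicial_fan (R : realFieldType) (r : nat)
  (nu : 'I_r -> 'rV[int]_4) (Sig : {set {set 'I_r}}) : Prop :=
  [/\ (forall S T : {set 'I_r}, S \in Sig -> T \subset S -> T \in Sig),
      (forall S, S \in Sig -> lin_indep R nu S),
      (forall (S T : {set 'I_r}) (x : 'rV[R]_4), S \in Sig -> T \in Sig ->
          in_cone nu S x -> in_cone nu T x -> in_cone nu (S :&: T) x) &
      (forall x : 'rV[R]_4, exists2 S, S \in Sig & in_cone nu S x)].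

Definition Delta_maximal (R : realFieldType) (k : nat) (V : 'I_k -> 'rV[int]_4)
  (r : nat) (nu : 'I_r -> 'rV[int]_4) (Sig : {set {set 'I_r}}) : Prop :=
  [/\ complete_simplicial_fan R nu Sig,
      (forall i, [set i] \in Sig) &
      (forall v : 'rV[int]_4, in_conv V (vR R v) -> v != 0 ->
         exists i, exists2 c : R, 0 < c & vR R v = c *: vR R (nu i))].

(* graph of the Sig-piecewise linear function phi_psi with phi(nu_i) = psi_i *)
Definition plval (R : realFieldType) (r : nat) (nu : 'I_r -> 'rV[int]_4)
  (Sig : {set {set 'I_r}}) (psi : 'rV[R]_r) (x : 'rV[R]_4) (y : R) : Prop :=
  exists2 S, S \in Sig &
  exists a : 'I_r -> R, [/\ forall i, 0 <= a i,
     x = \sum_(i in S) a i *: vR R (nu i) & y = \sum_(i in S) a i * psi 0 i].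

(* convexity in the toric sense: phi(t x + (1-t) y) >= t phi(x) + (1-t) phi(y) *)
Definition sigma_convex (R : realFieldType) (r : nat) (nu : 'I_r -> 'rV[int]_4)
  (Sig : {set {set 'I_r}}) (psi : 'rV[R]_r) : Prop :=
  forall (x1 x2 : 'rV[R]_4) (y1 y2 y t : R), 0 <= t <= 1 ->
    plval nu Sig psi x1 y1 -> plval nu Sig psi x2 y2 ->
    plval nu Sig psi (t *: x1 + (1 - t) *: x2) y ->
    t * y1 + (1 - t) * y2 <= y.

Definition strictly_convex (R : realFieldType) (r : nat) (nu : 'I_r -> 'rV[int]_4)
  (Sig : {set {set 'I_r}}) (psi : 'rV[R]_r) : Prop :=
  forall S, S \in Sig -> (forall T, T \in Sig -> S \subset T -> T = S) ->
  exists m : 'rV[R]_4,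
    (forall i, i \in S -> dot m (vR R (nu i)) = psi 0 i) /\
    (forall x y, plval nu Sig psi x y ->
       y <= dot m x /\ (y = dot m x -> in_cone nu S x)).

Definition projective (R : realFieldType) (r : nat) (nu : 'I_r -> 'rV[int]_4)
  (Sig : {set {set 'I_r}}) : Prop :=
  exists psi : 'rV[R]_r, strictly_convex nu Sig psi.

Definition Gamma (R : realFieldType) (r : nat) (nu : 'I_r -> 'rV[int]_4)
  (Sig : {set {set 'I_r}}) : 'rV[R]_r -> Prop :=
  fun psi => sigma_convex nu Sig psi.

Definition is_face (R : realFieldType) (r : nat) (C F : 'rV[R]_r -> Prop) : Prop :=
  exists w : 'rV[R]_r, (forall psi, C psi -> 0 <= dot w psi) /\
    (forall psi, F psi <-> (C psi /\ dot w psi = 0)).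

Definition dim_ge (R : realFieldType) (r : nat) (C : 'rV[R]_r -> Prop) (d : nat) : Prop :=
  exists A : 'M[R]_(d, r), (forall i, C (row i A)) /\ \rank A = d.

Definition dim_eq (R : realFieldType) (r : nat) (C : 'rV[R]_r -> Prop) (d : nat) : Prop :=
  dim_ge C d /\ ~ dim_ge C d.+1.

Definition wall_crossing (R : realFieldType) (r : nat) (nu : 'I_r -> 'rV[int]_4)
  (Sig Sig' : {set {set 'I_r}}) : Prop :=
  (exists psi, ~ (@Gamma R r nu Sig psi <-> @Gamma R r nu Sig' psi)) /\
  exists (F : 'rV[R]_r -> Prop) (d : nat),
    [/\ is_face (@Gamma R r nu Sig) F, is_face (@Gamma R r nu Sig') F,
        dim_eq (@Gamma R r nu Sig) d.+1, dim_eq (@Gamma R r nu Sig') d.+1 &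
        dim_eq F d].

(* (Jp, Jm) is the oriented circuit associated with the wall crossing from
   Sig to Sig'; Ks is the family of index sets J_+ u J_0 u J_- of the
   maximal non-simplicial cones of Sig_0. *)
Definition assoc_circuit (R : realFieldType) (r : nat) (nu : 'I_r -> 'rV[int]_4)
  (Sig Sig' : {set {set 'I_r}}) (Jp Jm : {set 'I_r}) : Prop :=
  [/\ [&& [disjoint Jp & Jm], (2 <= #|Jp|)%N & (2 <= #|Jm|)%N],
      (exists b : 'I_r -> int,
         [/\ \sum_(i in Jp :|: Jm) b i *: nu i = 0,
             forall i, i \in Jp -> 0 < b i &
             forall i, i \in Jm -> b i < 0]),
      ~ lin_indep R nu (Jp :|: Jm) /\
        (forall T : {set 'I_r}, T \proper (Jp :|: Jm) -> lin_indep R nu T),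
      Jp \in Sig /\ Jm \in Sig' &
      exists Ks : {set {set 'I_r}},
        [/\ forall K : {set 'I_r}, K \in Ks -> (Jp :|: Jm \subset K) /\ #|K| = 5%N,
            forall K : {set 'I_r}, K \in Ks -> forall S : {set 'I_r},
              (S \in Sig /\ cone_sub R nu S K) <->
              (exists2 w, w \in Jm & S \subset K :\ w),
            forall K : {set 'I_r}, K \in Ks -> forall S : {set 'I_r},
              (S \in Sig' /\ cone_sub R nu S K) <->
              (exists2 w, w \in Jp & S \subset K :\ w) &
            forall S : {set 'I_r}, ~ (exists2 K, K \in Ks & cone_sub R nu S K) ->
              (S \in Sig <-> S \in Sig')]].

(* standard basis vector e_(k+1) of Z^4 (k = 0,1,2,3) *)
Definition std (k : nat) : 'rV[int]_4 := \row_(j < 4) ((j : nat) == k)%:R.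

(* Main.v *)
Require Import Defs.
From HB Require Import structures.
From mathcomp Require Import all_boot all_order all_algebra.
From mathcomp Require Import zify ring lra.
From Stdlib Require Import Classical.
Import Order.TTheory GRing.Theory Num.Theory.
Local Open Scope ring_scope.
Set Implicit Arguments. Unset Strict Implicit. Unset Printing Implicit Defensive.

Section Dot.
Variable R : realFieldType.
Variable n : nat.
Implicit Types u v w : 'rV[R]_n.

Lemma dotC u v : dot u v = dot v u.
Proof. by apply: eq_bigr => j _; rewrite mulrC. Qed.

Lemma dotDl u v w : dot (u + v) w = dot u w + dot v w.
Proof. by rewrite /dot -big_split; apply: eq_bigr => j _; rewrite mxE mulrDl. Qed.

Lemma dotZl a u w : dot (a *: u) w = a * dot u w.
Proof. by rewrite /dot mulr_sumr; apply: eq_bigr => j _; rewrite mxE mulrA. Qed.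

Lemma dotNl u w : dot (- u) w = - dot u w.
Proof. by rewrite -scaleN1r dotZl mulN1r. Qed.

Lemma dotBl u v w : dot (u - v) w = dot u w - dot v w.
Proof. by rewrite dotDl dotNl. Qed.

Lemma dot0l w : dot 0 w = 0.
Proof. by rewrite /dot big1 // => j _; rewrite mxE mul0r. Qed.

Lemma dotDr u v w : dot w (u + v) = dot w u + dot w v.
Proof. by rewrite dotC dotDl !(dotC w). Qed.
Lemma dotZr a u w : dot w (a *: u) = a * dot w u.
Proof. by rewrite dotC dotZl dotC. Qed.
Lemma dotNr u w : dot w (- u) = - dot w u.
Proof. by rewrite dotC dotNl dotC. Qed.
Lemma dotBr u v w : dot w (u - v) = dot w u - dot w v.
Proof. by rewrite dotDr dotNr. Qed.
Lemma dot0r w : dot w 0 = 0.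
Proof. by rewrite dotC dot0l. Qed.

Lemma dot_sumr (I : finType) (P : pred I) (F : I -> 'rV[R]_n) w :
  dot w (\sum_(i | P i) F i) = \sum_(i | P i) dot w (F i).
Proof. exact: (big_morph _ (fun u v => dotDr u v w) (dot0r w)). Qed.

Lemma dot_sumnatr m k (F : nat -> 'rV[R]_n) w :
  dot w (\sum_(m <= i < k) F i) = \sum_(m <= i < k) dot w (F i).
Proof. exact: (big_morph _ (fun u v => dotDr u v w) (dot0r w)). Qed.

Lemma dot_self_eq0 u : dot u u = 0 -> u = 0.
Proof.
move=> H; apply/matrixP => i j; rewrite ord1 mxE.
have: \sum_(j < n) u 0 j * u 0 j = 0 by [].
move/eqP; rewrite psumr_eq0 => [/allP Hall|j0 _]; last by rewrite -expr2 sqr_ge0.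
by have := Hall j (mem_index_enum _); rewrite /= mulf_eq0 orbb => /eqP.
Qed.

End Dot.

Section Farkas.
Variable R : realFieldType.
Variable n : nat.

Lemma farkas (s : seq 'rV[R]_n) (b : 'rV[R]_n) :
  (forall x, (forall i, (i < size s)%N -> 0 <= dot s`_i x) -> 0 <= dot b x) ->
  exists l : nat -> R, (forall i, 0 <= l i) /\
     b = \sum_(0 <= i < size s) l i *: s`_i.
Proof.
move: {2}(size s) (erefl (size s)) => m Hm.
elim: m s Hm b => [|m IH] [|a s] //= Hm b H.
  exists (fun _ => 0); split => // /=; rewrite big_nil.
  apply: dot_self_eq0; apply/le_anti/andP; split; last first.
    by rewrite /dot sumr_ge0 // => j _; rewrite -expr2 sqr_ge0.
  have := H (- b) (fun i (hi : (i < 0)%N) => False_ind _ (notF hi)).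
  by rewrite dotNr oppr_ge0.
case: (classic (forall x, (forall i, (i < size s)%N -> 0 <= dot s`_i x) -> 0 <= dot b x)) => HP.
  have [l [l0 ->]] := IH s (eq_add_S _ _ Hm) b HP.
  exists (fun i => if i is i'.+1 then l i' else 0); split.
    by case.
  by rewrite /= big_nat_recl //= scale0r add0r.
have [xb [Hxb Hb]] : exists xb, (forall i, (i < size s)%N -> 0 <= dot s`_i xb) /\ dot b xb < 0.
  apply: NNPP => Hn; apply: HP => x Hx; rewrite leNgt; apply/negP => Hlt.
  by apply: Hn; exists x.
set al := dot a xb.
have Hal : al < 0.
  rewrite ltNge; apply/negP => Ha.
  have Hall : forall i, (i < size (a :: s))%N -> 0 <= dot (a::s)`_i xb.
    by case=> [|i] //= /Hxb.
  by move: (H xb Hall); rewrite leNgt Hb.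
set f := fun y : 'rV[R]_n => y - (dot y xb / al) *: a.
have Hfd : forall y x, dot (f y) x = dot y (x - (dot a x / al) *: xb).
  move=> y x; rewrite /f dotBl dotZl dotBr dotZr (dotC a x) (dotC y x) (dotC y xb).
  by ring.
have HP' : forall x, (forall i, (i < size (map f s))%N -> 0 <= dot (map f s)`_i x) -> 0 <= dot (f b) x.
  move=> x Hx; rewrite Hfd; apply: H; case=> [|i] /=.
    move=> _; rewrite dotBr dotZr -/al mulfVK ?subrr //.
    by rewrite lt_eqF.
  rewrite ltnS => hi; have := Hx i; rewrite size_map (nth_map 0) // Hfd; exact.
have [mu [mu0 Hmu]] := IH (map f s) (etrans (size_map _ _) (eq_add_S _ _ Hm)) (f b) HP'.
rewrite size_map in Hmu.
set t0 := (dot b xb - \sum_(0 <= i < size s) mu i * dot s`_i xb) / al.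
exists (fun i => if i is i'.+1 then mu i' else t0); split.
  case=> // ; rewrite /t0.
  rewrite -mulrNN -invrN; apply: divr_ge0; last by rewrite oppr_ge0 ltW.
  rewrite opprB subr_ge0; apply: le_trans (ltW Hb) _.
  rewrite big_nat_cond; apply: sumr_ge0 => i /andP[/andP[_ hi] _]; by rewrite mulr_ge0 ?mu0 ?Hxb.
rewrite /= big_nat_recl //=.
have -> : b = f b + (dot b xb / al) *: a by rewrite /f subrK.
rewrite Hmu.
have -> : \sum_(0 <= i < size s) mu i *: (map f s)`_i =
          \sum_(0 <= i < size s) mu i *: s`_i - (\sum_(0 <= i < size s) mu i * dot s`_i xb / al) *: a.
  rewrite scaler_suml -sumrB; apply: eq_big_nat => i /andP[_ hi].
  by rewrite (nth_map 0) // /f scalerBr scalerA mulrA.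
rewrite /t0 mulrBl scalerBl -mulr_suml.
by rewrite addrAC [RHS]addrC addrA.
Qed.

End Farkas.

Definition idot (u v : 'rV[int]_4) : int := \sum_(j < 4) u 0 j * v 0 j.

Section Poly.
Variable R : realFieldType.

Lemma dot_vR u v : dot (vR R u) (vR R v) = (idot u v)%:~R.
Proof. rewrite /dot /idot rmorph_sum; apply: eq_bigr => j _; by rewrite !mxE rmorphM. Qed.

Lemma sum_ind (I : finType) (W : lmodType R) (j : I) (F : I -> W) :
  \sum_i (i == j)%:R *: F i = F j.
Proof.
rewrite (bigD1 j) //= eqxx scale1r big1 ?addr0 // => i /negbTE ->; by rewrite scale0r.
Qed.

Lemma sum_ind1 (I : finType) (j : I) : \sum_i (i == j)%:R = 1 :> R.
Proof. rewrite (bigD1 j) //= eqxx big1 ?addr0 // => i /negbTE ->. done. Qed.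

Lemma in_conv_pt k (V : 'I_k -> 'rV[int]_4) j : in_conv V (vR R (V j)).
Proof.
exists (fun i => (i == j)%:R); split; first by move=> i; rewrite ler0n.
by rewrite sum_ind1 sum_ind.
Qed.

Lemma conv_lower k (V : 'I_k -> 'rV[int]_4) (y w : 'rV[R]_4) lo :
  in_conv V y -> (forall j, lo <= dot w (vR R (V j))) -> lo <= dot w y.
Proof.
move=> [a [a0 [a1 ->]]] H.
rewrite dot_sumr.
have -> : lo = \sum_j a j * lo by rewrite -mulr_suml a1 mul1r.
apply: ler_sum => j _; rewrite dotZr; exact: ler_wpM2l.
Qed.

Definition ext (v : 'rV[R]_4) (c : R) : 'rV[R]_5 :=
  \row_(j < 5) (if (j < 4)%N then v 0 (inord j) else c).
Definition proj (y : 'rV[R]_5) : 'rV[R]_4 := \row_(j < 4) y 0 (widen_ord (leqnSn 4) j).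

Lemma dot_ext v c y : dot (ext v c) y = dot v (proj y) + c * y 0 ord_max.
Proof.
rewrite /dot big_ord_recr /=; congr (_ + _); last by rewrite !mxE.
apply: eq_bigr => j _; by rewrite !mxE /= ltn_ord inord_val.
Qed.

Lemma ext_max v c : ext v c 0 ord_max = c.
Proof. by rewrite mxE. Qed.
Lemma ext_w v c (j : 'I_4) : ext v c 0 (widen_ord (leqnSn 4) j) = v 0 j.
Proof. by rewrite mxE /= ltn_ord inord_val. Qed.

Lemma bipolar k (V : 'I_k -> 'rV[int]_4) (x : 'rV[R]_4) :
  in_conv V (0 : 'rV[R]_4) -> (forall m, in_dual V m -> -1 <= dot m x) -> in_conv V x.
Proof.
move=> H0 Hd.
pose s := [seq ext (vR R (V j)) 1 | j <- enum 'I_k].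
have Hs : size s = k by rewrite size_map size_enum_ord.
have Hsj : forall j : 'I_k, s`_j = ext (vR R (V j)) 1.
  move=> j; rewrite /s (nth_map j) ?size_enum_ord //; congr (ext (vR R (V _)) _).
  by apply: val_inj; rewrite /= nth_enum_ord.
have [l [l0 Hl]] : exists l : nat -> R, (forall i, 0 <= l i) /\
     ext x 1 = \sum_(0 <= i < size s) l i *: s`_i.
  apply: farkas => y Hy.
  have Hj : forall j : 'I_k, 0 <= dot (vR R (V j)) (proj y) + y 0 ord_max.
    move=> j; have := Hy j; rewrite Hs ltn_ord Hsj dot_ext mul1r; exact.
  rewrite dot_ext mul1r.
  set m := proj y; set c := y 0 ord_max.
  have Hj' : forall j : 'I_k, - c <= dot m (vR R (V j)).
    by move=> j; rewrite dotC -subr_ge0 opprK; exact: Hj.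
  case: (ltgtP c 0) => Hc.
  - have := conv_lower H0 Hj'; rewrite dot0r; lra.
  - set m' := c^-1 *: m.
    have : in_dual V m'.
      move=> y0 Hy0; apply: conv_lower Hy0 _ => j.
      rewrite /m' dotZl -(ler_pM2l Hc) mulrA mulfV ?gt_eqF // mul1r mulrN1; exact: Hj'.
    move/Hd; rewrite /m' dotZl dotC -(ler_pM2l Hc) mulrA mulfV ?gt_eqF // mul1r mulrN1.
    lra.
  - rewrite Hc addr0 dotC; rewrite leNgt; apply/negP => Hneg.
    set d := dot m x in Hneg.
    have : in_dual V ((- 2 / d) *: m).
      move=> y0 Hy0; apply: conv_lower Hy0 _ => j.
      rewrite dotZl; have := Hj' j; rewrite Hc oppr0 => Hm.
      have : 0 <= - 2 / d by rewrite -mulrNN opprK -invrN divr_ge0 // oppr_ge0 ltW.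
      move=> Ht; have := mulr_ge0 Ht Hm; lra.
    move/Hd; rewrite dotZl -/d mulrAC -mulrA mulfV ?lt_eqF // mulr1; lra.
move: Hl; rewrite Hs big_mkord => Hl.
exists (fun j : 'I_k => l j); split; first by move=> j.
split.
  have := congr1 (fun z : 'rV[R]_5 => z 0 ord_max) Hl.
  rewrite ext_max summxE /= => ->; apply: eq_bigr => j _.
  by rewrite Hsj mxE ext_max mulr1.
apply/matrixP => i j; rewrite ord1.
have := congr1 (fun z : 'rV[R]_5 => z 0 (widen_ord (leqnSn 4) j)) Hl.
rewrite ext_w summxE /= => ->; rewrite summxE; apply: eq_bigr => j' _.
by rewrite Hsj [LHS]mxE ext_w [RHS]mxE.
Qed.

Lemma dual_U k (V : 'I_k -> 'rV[int]_4) :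
  reflexive_polytope R V ->
  exists k' (U : 'I_k' -> 'rV[int]_4),
    (forall j y, in_conv V y -> -1 <= dot (vR R (U j)) y) /\
    (forall z : 'rV[int]_4, ~ in_conv V (vR R z) -> exists j, idot (U j) z <= -2).
Proof.
move=> [[eps [eps0 Heps]] [k' [U HU]]].
have H0 : in_conv V (0 : 'rV[R]_4).
  by apply: Heps => j; rewrite mxE subrr normr0.
exists k', U; split.
  by move=> j y Hy; apply: (proj2 (HU _) (in_conv_pt U j)).
move=> z Hz; apply: NNPP => Hn; apply: Hz; apply: bipolar => // m Hm.
have Hm' := proj1 (HU m) Hm.
rewrite dotC; apply: conv_lower Hm' _ => j.
rewrite dotC dot_vR.
have : ~ (idot (U j) z <= -2) by move=> H; apply: Hn; exists j.
move/negP; rewrite -ltNge => H.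
have Hi : -1 <= idot (U j) z by lia.
by move: Hi; rewrite -(ler_int R) rmorphN1.
Qed.

End Poly.

Lemma idotDr u v w : idot u (v + w) = idot u v + idot u w.
Proof. by rewrite /idot -big_split; apply: eq_bigr => j _; rewrite mxE mulrDr. Qed.
Lemma idotZr u a v : idot u (a *: v) = a * idot u v.
Proof. by rewrite /idot mulr_sumr; apply: eq_bigr => j _; rewrite mxE mulrCA. Qed.
Lemma idotNr u v : idot u (- v) = - idot u v.
Proof. by rewrite -scaleN1r idotZr mulN1r. Qed.
Lemma idot0r u : idot u 0 = 0.
Proof. by rewrite /idot big1 // => j _; rewrite mxE mulr0. Qed.

Section Fan.
Variable R : realFieldType.

Lemma vRD u v : vR R (u + v) = vR R u + vR R v.
Proof. by apply/matrixP => i j; rewrite !mxE rmorphD. Qed.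
Lemma vRZ a u : vR R (a *: u) = a%:~R *: vR R u.
Proof. by apply/matrixP => i j; rewrite !mxE rmorphM. Qed.
Lemma vRN u : vR R (- u) = - vR R u.
Proof. by apply/matrixP => i j; rewrite !mxE rmorphN. Qed.
Lemma vR0 : vR R 0 = 0.
Proof. by apply/matrixP => i j; rewrite !mxE. Qed.

Lemma sum2 r (W : zmodType) (a b : 'I_r) (F : 'I_r -> W) : a != b ->
  \sum_(l in [set a; b]) F l = F a + F b.
Proof. by move=> ab; rewrite big_setU1 ?inE // big_set1. Qed.

Lemma sum3 r (W : zmodType) (a b c : 'I_r) (F : 'I_r -> W) : a != b -> a != c -> b != c ->
  \sum_(l in [set a; b; c]) F l = F a + F b + F c.
Proof.
move=> ab ac bc; rewrite -setUA big_setU1 ?inE ?negb_or ?ab ?ac // sum2 //.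
by rewrite /= addrA.
Qed.

Lemma LI2 r (nu : 'I_r -> 'rV[int]_4) a b ca cb : a != b -> lin_indep R nu [set a; b] ->
  ca *: vR R (nu a) + cb *: vR R (nu b) = 0 -> ca = 0 /\ cb = 0.
Proof.
move=> ab H E.
pose c := fun l => if l == a then ca else cb.
have Hc : \sum_(l in [set a; b]) c l *: vR R (nu l) = 0.
  by rewrite sum2 // /c eqxx (eq_sym b a) (negbTE ab).
have := H c Hc a; have := H c Hc b; rewrite /c eqxx !inE !eqxx orbT eq_sym (negbTE ab).
by move=> -> // ->.
Qed.

Lemma LI3 r (nu : 'I_r -> 'rV[int]_4) a b c ca cb cc : a != b -> a != c -> b != c ->
  lin_indep R nu [set a; b; c] ->
  ca *: vR R (nu a) + cb *: vR R (nu b) + cc *: vR R (nu c) = 0 ->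
  [/\ ca = 0, cb = 0 & cc = 0].
Proof.
move=> ab ac bc H E.
pose f := fun l => if l == a then ca else if l == b then cb else cc.
have Hf : \sum_(l in [set a; b; c]) f l *: vR R (nu l) = 0.
  rewrite sum3 // /f eqxx (eq_sym b a) (negbTE ab) eqxx.
  by rewrite (eq_sym c a) (negbTE ac) (eq_sym c b) (negbTE bc).
have := H f Hf a; have := H f Hf b; have := H f Hf c.
rewrite /f !inE !eqxx !orbT (eq_sym b a) (negbTE ab) (eq_sym c a) (negbTE ac) (eq_sym c b) (negbTE bc).
by move=> -> // -> // ->.
Qed.

Lemma conv3 k (V : 'I_k -> 'rV[int]_4) (p q t : 'rV[R]_4) (al be ga : R) :
  in_conv V p -> in_conv V q -> in_conv V t -> 0 <= al -> 0 <= be -> 0 <= ga ->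
  al + be + ga = 1 -> in_conv V (al *: p + be *: q + ga *: t).
Proof.
move=> [a1 [a10 [a11 ->]]] [a2 [a20 [a21 ->]]] [a3 [a30 [a31 ->]]] h1 h2 h3 hs.
exists (fun j => al * a1 j + be * a2 j + ga * a3 j); split.
  by move=> j; rewrite !addr_ge0 ?mulr_ge0.
split.
  by rewrite !big_split /= -!mulr_sumr a11 a21 a31 !mulr1.
rewrite !scaler_sumr -!big_split /=; apply: eq_bigr => j _.
by rewrite !scalerDl !scalerA.
Qed.

Lemma in_cone1 r (nu : 'I_r -> 'rV[int]_4) i : in_cone nu [set i] (vR R (nu i)).
Proof. by exists (fun _ => 1); split => [i'|]; rewrite ?ler01 // big_set1 scale1r. Qed.

Lemma in_cone0 r (nu : 'I_r -> 'rV[int]_4) (x : 'rV[R]_4) : in_cone nu set0 x -> x = 0.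
Proof. by move=> [a [_ ->]]; rewrite big_set0. Qed.

Lemma setI1_out r (kk : 'I_r) (S : {set 'I_r}) : kk \notin S -> [set kk] :&: S = set0.
Proof.
move=> H; apply/setP => l; rewrite !inE; apply/negP => /andP[/eqP -> ].
by apply/negP.
Qed.

Lemma sig_sub r (nu : 'I_r -> 'rV[int]_4) (Sig : {set {set 'I_r}}) (S T : {set 'I_r}) :
  complete_simplicial_fan R nu Sig -> S \in Sig -> T \subset S -> lin_indep R nu T.
Proof. by move=> [H1 H2 _ _] HS HT; apply: H2; exact: H1 HS HT. Qed.

End Fan.

Lemma rearr_a (W : zmodType) (A B Y Z : W) : A + Y + Z = B -> (A - B) + Y + Z = 0.
Proof. by move=> <-; rewrite -(addrA A Y Z) opprD addrA subrr add0r -addrA addNr. Qed.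
Lemma rearr_b (W : zmodType) (A B Y Z : W) : A + Y + Z = B -> A + (Y - B) + Z = 0.
Proof. move=> E; rewrite (addrC A); apply: rearr_a; by rewrite (addrC Y). Qed.
Lemma rearr_c (W : zmodType) (A B Y Z : W) : A + Y + Z = B -> A + Y + (Z - B) = 0.
Proof. move=> E; rewrite addrC addrA; apply: rearr_a; by rewrite addrC addrA in E. Qed.

Section Main.
Variable R : realFieldType.

Lemma nu_conv k (V : 'I_k -> 'rV[int]_4) r (nu : 'I_r -> 'rV[int]_4) l :
  boundary_enum R V nu -> in_conv V (vR R (nu l)).
Proof. by move=> [_ H]; have [] := proj2 (H (nu l)) (ex_intro _ l erefl). Qed.

Lemma pair_out k (V : 'I_k -> 'rV[int]_4) r (nu : 'I_r -> 'rV[int]_4) Sig i j :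
  Delta_maximal R V nu Sig -> [set i; j] \in Sig -> i != j ->
  ~ in_conv V (vR R (nu i + nu j)).
Proof.
move=> [Hfan Hsing Hdm] Hij ij Hin.
have LI : lin_indep R nu [set i; j] by case: Hfan => _ H2 _ _; exact: H2.
have No : ~ (vR R (nu i) + vR R (nu j) = 0).
  move=> E; have := LI2 (ca:=1) (cb:=1) ij LI; rewrite !scale1r => /(_ E) [/eqP].
  by rewrite oner_eq0.
have Hnz : nu i + nu j != 0.
  by apply/eqP => E; apply: No; rewrite -vRD E vR0.
have [kk [c0 c0p Hc]] := Hdm _ Hin Hnz.
rewrite vRD in Hc.
case: (boolP (kk \in [set i; j])) => Hk.
  rewrite !inE in Hk; case/orP: Hk => /eqP Ek; subst kk.
    have E : (1 - c0) *: vR R (nu i) + 1 *: vR R (nu j) = 0.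
      by rewrite scalerBl !scale1r addrAC Hc subrr.
    have [_ /eqP] := LI2 ij LI E; by rewrite oner_eq0.
  have E : 1 *: vR R (nu i) + (1 - c0) *: vR R (nu j) = 0.
    by rewrite scalerBl !scale1r addrA Hc subrr.
  have [/eqP] := LI2 ij LI E; by rewrite oner_eq0.
case: Hfan => _ _ H3 _.
have C2 : in_cone nu [set i; j] (vR R (nu kk)).
  exists (fun _ => c0^-1); split => [l|]; first by rewrite invr_ge0 ltW.
  by rewrite sum2 // -scalerDr Hc scalerA mulVf ?gt_eqF // scale1r.
have := H3 _ _ _ (Hsing kk) Hij (@in_cone1 R _ nu kk) C2.
rewrite setI1_out // => /in_cone0 E.
by apply: No; rewrite Hc E scaler0.
Qed.

Lemma pair_facet k (V : 'I_k -> 'rV[int]_4) r (nu : 'I_r -> 'rV[int]_4) Sig i j :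
  reflexive_polytope R V -> boundary_enum R V nu -> Delta_maximal R V nu Sig ->
  [set i; j] \in Sig -> i != j ->
  exists w : 'rV[int]_4, [/\ idot w (nu i) = -1, idot w (nu j) = -1 &
     forall l, -1 <= idot w (nu l)].
Proof.
move=> Hr Hb Hd Hij ij.
have [k' [U [HU1 HU2]]] := dual_U Hr.
have [j' Hj'] := HU2 _ (pair_out Hd Hij ij).
have Hlow : forall l, -1 <= idot (U j') (nu l).
  move=> l; rewrite -(ler_int R) rmorphN1 -dot_vR; apply: HU1; exact: nu_conv.
exists (U j'); rewrite idotDr in Hj'.
have := Hlow i; have := Hlow j; split => //; lia.
Qed.

Lemma empty3 k (V : 'I_k -> 'rV[int]_4) r (nu : 'I_r -> 'rV[int]_4) Sig a b c
  (u w : 'rV[int]_4) (D sa sb sc : int) :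
  boundary_enum R V nu -> Delta_maximal R V nu Sig ->
  a != b -> a != c -> b != c -> [set a; b; c] \in Sig ->
  idot u (nu a) = -1 -> idot u (nu b) = -1 -> idot u (nu c) = -1 -> idot u w = -1 ->
  0 < D -> 0 <= sa -> 0 <= sb -> 0 <= sc ->
  D *: w = sa *: nu a + sb *: nu b + sc *: nu c ->
  [\/ [/\ sa = D, sb = 0 & sc = 0], [/\ sa = 0, sb = D & sc = 0] |
      [/\ sa = 0, sb = 0 & sc = D]].
Proof.
move=> Hbe [Hfan Hsing Hdm] ab ac bc HT Ha Hb Hc Hw D0 sa0 sb0 sc0 E.
have LI : lin_indep R nu [set a; b; c] by case: Hfan => _ H2 _ _; exact: H2.
have Hsum : sa + sb + sc = D.
  have := congr1 (idot u) E; rewrite idotZr !idotDr !idotZr Ha Hb Hc Hw; lia.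
have EwR : D%:~R *: vR R w = sa%:~R *: vR R (nu a) + sb%:~R *: vR R (nu b) + sc%:~R *: vR R (nu c).
  by rewrite -!vRZ -!vRD E.
have DR0 : (D%:~R : R) != 0 by rewrite intr_eq0 gt_eqF.
have Hw' : vR R w = (sa%:~R / D%:~R) *: vR R (nu a) + (sb%:~R / D%:~R) *: vR R (nu b)
                    + (sc%:~R / D%:~R) *: vR R (nu c).
  have -> : vR R w = (D%:~R)^-1 *: (D%:~R *: vR R w) by rewrite scalerA mulVf // scale1r.
  rewrite EwR !scalerDr !scalerA.
  by rewrite ![_^-1 * _]mulrC.
have Hconv : in_conv V (vR R w).
  rewrite Hw'; apply: conv3; try exact: nu_conv.
  - by rewrite divr_ge0 ?ler0z // ltW ?ltr0z.
  - by rewrite divr_ge0 ?ler0z // ltW ?ltr0z.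
  - by rewrite divr_ge0 ?ler0z // ltW ?ltr0z.
  by rewrite -!mulrDl -!rmorphD Hsum mulfV.
have Hnz : w != 0 by apply/eqP => E0; move: Hw; rewrite E0 idot0r.
have [kk [c0 c0p Hkk]] := Hdm _ Hconv Hnz.
have H0 : sa%:~R *: vR R (nu a) + sb%:~R *: vR R (nu b) + sc%:~R *: vR R (nu c)
          = (D%:~R * c0) *: vR R (nu kk) by rewrite -EwR Hkk scalerA.
case: (boolP (kk \in [set a; b; c])) => Hk.
  rewrite !inE in Hk; case/orP: Hk; first case/orP; move=> /eqP Ek; subst kk.
  - have E' := rearr_a H0; rewrite -scalerBl in E'.
    have [_ /eqP] := LI3 ab ac bc LI E'; rewrite intr_eq0 => /eqP e1.
    move/eqP; rewrite intr_eq0 => /eqP e2.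
    by constructor 1; split => //; lia.
  - have E' := rearr_b H0; rewrite -scalerBl in E'.
    have [/eqP] := LI3 ab ac bc LI E'; rewrite intr_eq0 => /eqP e1 _.
    move/eqP; rewrite intr_eq0 => /eqP e2.
    by constructor 2; split => //; lia.
  - have E' := rearr_c H0; rewrite -scalerBl in E'.
    have [/eqP] := LI3 ab ac bc LI E'; rewrite intr_eq0 => /eqP e1.
    move/eqP; rewrite intr_eq0 => /eqP e2 _.
    by constructor 3; split => //; lia.
case: Hfan => _ _ H3 _.
have C3 : in_cone nu [set a; b; c] (vR R (nu kk)).
  exists (fun l => if l == a then c0^-1 * (sa%:~R / D%:~R) else
                   if l == b then c0^-1 * (sb%:~R / D%:~R) else c0^-1 * (sc%:~R / D%:~R)).
  split.
    move=> l; have hc : 0 <= c0^-1 by rewrite invr_ge0 ltW.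
    by case: ifP => _; [|case: ifP => _]; rewrite mulr_ge0 // divr_ge0 ?ler0z // ltW ?ltr0z.
  rewrite sum3 // eqxx (eq_sym b a) (negbTE ab) eqxx (eq_sym c a) (negbTE ac) (eq_sym c b) (negbTE bc).
  rewrite -!(scalerA c0^-1) -!scalerDr -Hw' Hkk scalerA mulVf ?gt_eqF // scale1r //.
have := H3 _ _ _ (Hsing kk) HT (@in_cone1 R _ nu kk) C3.
rewrite setI1_out // => /in_cone0 E0.
have : dot (vR R u) (vR R w) = 0 by rewrite Hkk E0 scaler0 dot0r.
by rewrite dot_vR Hw => /eqP; rewrite intr_eq0.
Qed.

Lemma sat_pos k (V : 'I_k -> 'rV[int]_4) r (nu : 'I_r -> 'rV[int]_4) Sig a b c
  (u z : 'rV[int]_4) (D la lb lc : int) :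
  boundary_enum R V nu -> Delta_maximal R V nu Sig ->
  a != b -> a != c -> b != c -> [set a; b; c] \in Sig ->
  idot u (nu a) = -1 -> idot u (nu b) = -1 -> idot u (nu c) = -1 ->
  0 < D -> D *: z = la *: nu a + lb *: nu b + lc *: nu c ->
  exists qa qb qc, [/\ la = qa * D, lb = qb * D & lc = qc * D].
Proof.
move=> Hbe Hd ab ac bc HT Ha Hb Hc D0 E.
have D0' : D != 0 by rewrite gt_eqF.
set ra := (la %% D)%Z; set rb := (lb %% D)%Z; set rc := (lc %% D)%Z.
set qa := (la %/ D)%Z; set qb := (lb %/ D)%Z; set qc := (lc %/ D)%Z.
have Era : la = qa * D + ra := divz_eq la D.
have Erb : lb = qb * D + rb := divz_eq lb D.
have Erc : lc = qc * D + rc := divz_eq lc D.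
have ra0 : 0 <= ra := modz_ge0 la D0'.
have rb0 : 0 <= rb := modz_ge0 lb D0'.
have rc0 : 0 <= rc := modz_ge0 lc D0'.
have raD : ra < D := ltz_pmod la D0.
have rbD : rb < D := ltz_pmod lb D0.
have rcD : rc < D := ltz_pmod lc D0.
set z' := z - (qa *: nu a + qb *: nu b + qc *: nu c).
have Ez' : D *: z' = ra *: nu a + rb *: nu b + rc *: nu c.
  apply/matrixP => i j; have := congr1 (fun m : 'rV[int]_4 => m i j) E; rewrite !mxE => Ec.
  rewrite mulrBr Ec.
  have -> : ra = la - qa * D by nia.
  have -> : rb = lb - qb * D by nia.
  have -> : rc = lc - qc * D by nia.
  ring.
clearbody z'.
set h := idot u z'.
have Hh : D * h = - (ra + rb + rc).
  have := congr1 (idot u) Ez'; rewrite idotZr !idotDr !idotZr Ha Hb Hc -/h; lia.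
have : h = 0 \/ h = -1 \/ h = -2 by nia.
case=> [h0|[h1|h2]].
- have [ea eb ec] : [/\ ra = 0, rb = 0 & rc = 0] by split; nia.
  by exists qa, qb, qc; split; [rewrite Era ea | rewrite Erb eb | rewrite Erc ec]; rewrite addr0.
- have [] := empty3 Hbe Hd ab ac bc HT Ha Hb Hc h1 D0 ra0 rb0 rc0 Ez' => [] []; lia.
- set w := nu a + nu b + nu c - z'.
  have Hw : idot u w = -1 by rewrite /w idotDr idotNr !idotDr Ha Hb Hc -/h h2.
  have Ew : D *: w = (D - ra) *: nu a + (D - rb) *: nu b + (D - rc) *: nu c.
    apply/matrixP => i j; have := congr1 (fun m : 'rV[int]_4 => m i j) Ez'; rewrite !mxE => Ec.
    rewrite mulrBr Ec; ring.
  have [] := empty3 Hbe Hd ab ac bc HT Ha Hb Hc Hw D0 _ _ _ Ew => [|||[]|[]|[]]; lia.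
Qed.

Lemma sat k (V : 'I_k -> 'rV[int]_4) r (nu : 'I_r -> 'rV[int]_4) Sig a b c
  (u z : 'rV[int]_4) (D la lb lc : int) :
  boundary_enum R V nu -> Delta_maximal R V nu Sig ->
  a != b -> a != c -> b != c -> [set a; b; c] \in Sig ->
  idot u (nu a) = -1 -> idot u (nu b) = -1 -> idot u (nu c) = -1 ->
  D != 0 -> D *: z = la *: nu a + lb *: nu b + lc *: nu c ->
  exists qa qb qc, [/\ la = qa * D, lb = qb * D & lc = qc * D].
Proof.
move=> Hbe Hd ab ac bc HT Ha Hb Hc D0 E.
case: (ltgtP D 0) D0 => // HD _; last exact: sat_pos Hbe Hd ab ac bc HT Ha Hb Hc HD E.
have HD' : 0 < - D by rewrite oppr_gt0.
have E' : (- D) *: (- z) = la *: nu a + lb *: nu b + lc *: nu c by rewrite scaleNr scalerN opprK.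
have [qa [qb [qc [e1 e2 e3]]]] := sat_pos Hbe Hd ab ac bc HT Ha Hb Hc HD' E'.
by exists (- qa), (- qb), (- qc); split; rewrite ?e1 ?e2 ?e3 mulrN mulNr.
Qed.

End Main.

Lemma basis_ext (w : 'I_3 -> 'rV[int]_4) :
  (forall l : 'I_3 -> int, \sum_k l k *: w k = 0 -> forall k, l k = 0) ->
  (forall (D : int) (z : 'rV[int]_4) (l : 'I_3 -> int), D != 0 ->
     D *: z = \sum_k l k *: w k -> exists q : 'I_3 -> int, forall k, l k = q k * D) ->
  exists P : 'M[int]_4, P \in unitmx /\ forall k : 'I_3, w k *m P = std k.
Proof.
move=> LI SAT.
pose M : 'M[int]_(3, 3 + 1) := \matrix_(i, j) w i 0 j.
have [L Lu [Rm Ru [d _ HM]]] := int_Smith_normal_form M.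
set Dm := \matrix_(i, j) _ in HM.
pose Li := invmx L.
have rowM : forall k, row k M = w k by move=> k; apply/matrixP => i j; rewrite !mxE ord1.
have Hrow : forall i, \sum_k Li i k *: w k = d`_i *: row (lshift 1 i) Rm.
  move=> i.
  have E : Li *m M = Dm *m Rm by rewrite HM -mulmxA mulKmx.
  have := congr1 (row i) E; rewrite !row_mul !mulmx_sum_row => E2.
  transitivity (\sum_k row i Li 0 k *: row k M).
    by apply: eq_bigr => k _; rewrite rowM mxE.
  rewrite E2.
  rewrite (bigD1 (lshift 1 i)) //= big1 ?addr0.
    by rewrite !mxE /= eqxx mulr1n.
  move=> j hj; rewrite !mxE; case: eqP => [hij|]; last by rewrite mulr0n scale0r.
  by move: hj; rewrite -(inj_eq val_inj) /= -hij eqxx.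
have LiL : Li *m L = 1%:M by rewrite mulVmx.
have Hd : forall i : 'I_3, d`_i * d`_i = 1.
  move=> i.
  have [q Hq] : exists q : 'I_3 -> int, forall k, Li i k = q k * d`_i.
    case: (eqVneq d`_i 0) => Hd0.
      have H0 : \sum_k Li i k *: w k = 0 by rewrite Hrow Hd0 scale0r.
      exists (fun _ => 0) => k; rewrite mul0r; exact: LI H0 k.
    exact: SAT Hd0 (esym (Hrow i)).
  have := congr1 (fun A : 'M[int]_3 => A i i) LiL.
  rewrite !mxE eqxx /= (eq_bigr (fun k => d`_i * (q k * L k i))); last first.
    by move=> k _; rewrite Hq mulrAC mulrC.
  rewrite -mulr_sumr => E1.
  have : (d`_i %| 1)%Z by apply/dvdzP; exists (\sum_k q k * L k i); rewrite mulrC E1.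
  rewrite dvdz1 => /eqP Habs.
  have : `|d`_i| = 1 :> int by rewrite -abszE Habs.
  by case: (ger0P d`_i) => _ E; [rewrite E | rewrite -mulrNN E mulr1].
pose Dd : 'M[int]_3 := diag_mx (\row_(i < 3) d`_i).
have HDm : Dm = row_mx Dd 0.
  apply/matrixP => i j; rewrite mxE; case: (splitP j) => j' Hj.
    have -> : j = lshift 1 j' by apply: val_inj.
    by rewrite row_mxEl !mxE.
  have -> : j = rshift 3 j' by apply: val_inj.
  rewrite row_mxEr mxE /=; case: eqP => // hij; have := ltn_ord i; rewrite hij; lia.
pose A : 'M[int]_(3 + 1) := block_mx (L *m Dd) 0 0 1%:M *m Rm.
have Au : A \in unitmx.
  rewrite unitmx_mul Ru andbT unitmxE det_ublock det1 mulr1 det_mulmx unitrM.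
  rewrite -unitmxE Lu /= det_diag; apply/rpred_prod => i _; rewrite mxE.
  by apply/unitrP; exists d`_i; rewrite Hd.
have HA : forall k : 'I_3, row (lshift 1 k) A = w k.
  move=> k; rewrite /A block_mxEv mul_col_mx -rowM HM HDm.
  by rewrite rowKu mul_mx_row mulmx0.
exists (invmx A); split; first by rewrite unitmx_inv.
move=> k; rewrite -HA -row_mul mulmxV //.
apply/matrixP => i j; rewrite !mxE /=.
by rewrite -(inj_eq val_inj) /= eq_sym.
Qed.

Lemma heights (B1 B2 B3 B4 x3 x4 y1 y2 : int) : 0 < B1 -> 0 < B2 -> B3 < 0 -> B4 < 0 ->
  -1 <= x3 -> -1 <= x4 -> -1 <= y1 -> -1 <= y2 ->
  B1 * -1 + B2 * -1 + B3 * x3 + B4 * x4 = 0 -> B1 * y1 + B2 * y2 + B3 * -1 + B4 * -1 = 0 ->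
  x3 = -1 /\ x4 = -1.
Proof.
move=> B1p B2p B3n B4n l3 l4 l1 l2 E1 E2.
have p3 : B3 * x3 + B3 <= 0.
  by have := @mulr_le0_ge0 _ B3 (x3 + 1) (ltW B3n); rewrite mulrDr mulr1; apply; lia.
have p4 : B4 * x4 + B4 <= 0.
  by have := @mulr_le0_ge0 _ B4 (x4 + 1) (ltW B4n); rewrite mulrDr mulr1; apply; lia.
have q1 : 0 <= B1 * y1 + B1.
  by have := @mulr_ge0 _ B1 (y1 + 1) (ltW B1p); rewrite mulrDr mulr1; apply; lia.
have q2 : 0 <= B2 * y2 + B2.
  by have := @mulr_ge0 _ B2 (y2 + 1) (ltW B2p); rewrite mulrDr mulr1; apply; lia.
have [z3 z4] : B3 * x3 + B3 = 0 /\ B4 * x4 + B4 = 0.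
  move: E1 E2 p3 p4 q1 q2; rewrite !mulrN1.
  move: (B3 * x3) (B4 * x4) (B1 * y1) (B2 * y2) => m3 m4 m1 m2 E1 E2 p3 p4 q1 q2.
  split; lia.
have : B3 * (x3 + 1) = 0 by rewrite mulrDr mulr1.
move/eqP; rewrite mulf_eq0 lt_eqF //= => /eqP e3.
have : B4 * (x4 + 1) = 0 by rewrite mulrDr mulr1.
move/eqP; rewrite mulf_eq0 lt_eqF //= => /eqP e4.
split; lia.
Qed.

Lemma sign_pos (B D q : int) : 0 < B -> D < 0 -> B = q * - D -> 0 < q.
Proof. move=> *; nia. Qed.
Lemma sign_neg (B D q : int) : B < 0 -> D < 0 -> B = q * - D -> q < 0.
Proof. move=> *; nia. Qed.
Lemma unit_neg (c q : int) : c < 0 -> -1 = q * - c -> c = -1.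
Proof. move=> h1 h2. have : q < 0 by nia. move=> h3. nia. Qed.
Lemma two_ones (a b : int) : 0 < a -> 0 < b -> -1 = a * -1 + b * -1 + -1 * -1 -> a = 1 /\ b = 1.
Proof. move=> *; lia. Qed.

Lemma scaleI_int (D : int) (x y : 'rV[int]_4) : D != 0 -> D *: x = D *: y -> x = y.
Proof.
move=> D0 E; apply/matrixP => i j; have := congr1 (fun m : 'rV[int]_4 => m i j) E.
by rewrite !mxE => /mulfI; apply.
Qed.

Unset Implicit Arguments.

Lemma sum_I3 (W : zmodType) (F : 'I_3 -> W) :
  \sum_(k < 3) F k = F ord0 + F (lift ord0 ord0) + F (lift ord0 (lift ord0 ord0)).
Proof. by rewrite !big_ord_recl big_ord0 addr0 addrA. Qed.

Lemma I3_cases (P : 'I_3 -> Prop) :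
  P ord0 -> P (lift ord0 ord0) -> P (lift ord0 (lift ord0 ord0)) -> forall k, P k.
Proof.
move=> h0 h1 h2 k.
have : (k : nat) = 0%N \/ (k : nat) = 1%N \/ (k : nat) = 2%N by case: k => [[|[|[|m]]] hm] //=; auto.
case=> [e|[e|e]].
- by have -> : k = ord0 by apply: val_inj.
- by have -> : k = lift ord0 ord0 by apply: val_inj.
- by have -> : k = lift ord0 (lift ord0 ord0) by apply: val_inj.
Qed.

Lemma LI3_int (R : realFieldType) r (nu : 'I_r -> 'rV[int]_4) a b c (ca cb cc : int) :
  a != b -> a != c -> b != c -> lin_indep R nu [set a; b; c] ->
  ca *: nu a + cb *: nu b + cc *: nu c = 0 -> [/\ ca = 0, cb = 0 & cc = 0].
Proof.
move=> ab ac bc LI E.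
have := congr1 (vR R) E; rewrite !vRD !vRZ vR0 => E'.
have [] := LI3 ab ac bc LI E'.
by move=> /eqP; rewrite intr_eq0 => /eqP -> /eqP; rewrite intr_eq0 => /eqP -> /eqP; rewrite intr_eq0 => /eqP ->.
Qed.

Theorem lemma4 (R : realFieldType) (k : nat) (V : 'I_k -> 'rV[int]_4)
  (r : nat) (nu : 'I_r -> 'rV[int]_4)
  (Sig Sig' : {set {set 'I_r}}) (Jp Jm : {set 'I_r}) :
  @reflexive_polytope R k V ->
  @boundary_enum R k V r nu ->
  @Delta_maximal R k V r nu Sig -> @projective R r nu Sig ->
  @Delta_maximal R k V r nu Sig' -> @projective R r nu Sig' ->
  @wall_crossing R r nu Sig Sig' ->
  @assoc_circuit R r nu Sig Sig' Jp Jm ->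
  #|Jp :|: Jm| = 4%N ->
  exists P : 'M[int]_4, P \in unitmx /\
    exists i1 i2 j1 j2 : 'I_r,
      [/\ Jp = [set i1; i2], Jm = [set j1; j2],
          nu i1 *m P = std 0 /\ nu i2 *m P = std 1 &
          nu j1 *m P = std 2 /\ nu j2 *m P = std 0 + std 1 - std 2].
Proof.
move=> Hr Hbe Hd1 _ Hd2 _ _ Hac Hcard.
case: Hac => /and3P[Hdisj Hp2 Hm2] [b [Hb0 Hbp Hbm]] [_ _] [HJp HJm] [Ks [HK1 HK2 HK3 HK4]].
have Hc : (#|Jp| + #|Jm| = 4)%N.
  by rewrite -Hcard cardsU (disjoint_setI0 Hdisj) cards0 subn0.
have /cards2P [i1 [i2 [i12 EJp]]] : #|Jp| == 2%N by apply/eqP; lia.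
have /cards2P [j1 [j2 [j12 EJm]]] : #|Jm| == 2%N by apply/eqP; lia.
have dis : forall x y, x \in Jp -> y \in Jm -> x != y.
  by move=> x y hx hy; apply/eqP => exy; move: (disjointFr Hdisj hx); rewrite exy hy.
have i1Jp : i1 \in Jp by rewrite EJp !inE eqxx.
have i2Jp : i2 \in Jp by rewrite EJp !inE eqxx orbT.
have j1Jm : j1 \in Jm by rewrite EJm !inE eqxx.
have j2Jm : j2 \in Jm by rewrite EJm !inE eqxx orbT.
have d11 := dis _ _ i1Jp j1Jm. have d12 := dis _ _ i1Jp j2Jm.
have d21 := dis _ _ i2Jp j1Jm. have d22 := dis _ _ i2Jp j2Jm.
set B1 := b i1; set B2 := b i2; set B3 := b j1; set B4 := b j2.
have B1p : 0 < B1 by exact: Hbp. have B2p : 0 < B2 by exact: Hbp.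
have B3n : B3 < 0 by exact: Hbm. have B4n : B4 < 0 by exact: Hbm.
set n1 := nu i1; set n2 := nu i2; set n3 := nu j1; set n4 := nu j2.
have Erel : B1 *: n1 + B2 *: n2 + B3 *: n3 + B4 *: n4 = 0.
  move: Hb0; rewrite EJp EJm -setUA big_setU1; last first.
    by rewrite !inE negb_or i12 /= negb_or d11 d12.
  rewrite /= big_setU1; last by rewrite !inE negb_or d21 d22.
  by rewrite /= sum2 // !addrA.
have HJp' : [set i1; i2] \in Sig by rewrite -EJp.
have HJm' : [set j1; j2] \in Sig' by rewrite -EJm.
have [u [hu1 hu2 hulow]] := pair_facet Hr Hbe Hd1 HJp' i12.
have [u' [hu3 hu4 hu'low]] := pair_facet Hr Hbe Hd2 HJm' j12.
have [h3 h4] : idot u n3 = -1 /\ idot u n4 = -1.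
  have E1 := congr1 (idot u) Erel; have E2 := congr1 (idot u') Erel.
  rewrite !idotDr !idotZr idot0r hu1 hu2 in E1.
  rewrite !idotDr !idotZr idot0r hu3 hu4 in E2.
  exact: heights B1p B2p B3n B4n (hulow j1) (hulow j2) (hu'low i1) (hu'low i2) E1 E2.
have [Hfan1 _ _] := Hd1.
have [K HK] : exists K, K \in Ks.
  apply: NNPP => HnK.
  have HnK' : ~ (exists2 K, K \in Ks & cone_sub R nu Jm K) by move=> [K HK _]; apply: HnK; exists K.
  have HJmSig : Jm \in Sig := proj2 (HK4 Jm HnK') HJm.
  have ErelR : B1%:~R *: vR R n1 + B2%:~R *: vR R n2 + B3%:~R *: vR R n3 + B4%:~R *: vR R n4 = 0.
    by rewrite -!vRZ -!vRD Erel vR0.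
  set p := B1%:~R *: vR R n1 + B2%:~R *: vR R n2.
  have C1 : in_cone nu Jp p.
    exists (fun l => if l == i1 then B1%:~R else B2%:~R); split.
      by move=> l; case: ifP => _; rewrite ler0z ltW.
    by rewrite EJp sum2 // eqxx eq_sym (negbTE i12).
  have C2 : in_cone nu Jm p.
    exists (fun l => if l == j1 then (- B3)%:~R else (- B4)%:~R); split.
      by move=> l; case: ifP => _; rewrite ler0z oppr_ge0 ltW.
    rewrite EJm sum2 // eqxx eq_sym (negbTE j12) !rmorphN !scaleNr.
    by apply/eqP; rewrite -opprD -addr_eq0 addrA ErelR.
  case: Hfan1 => _ H2 H3 _.
  have := H3 _ _ _ HJp HJmSig C1 C2; rewrite (disjoint_setI0 Hdisj) => /in_cone0 Hp0.
  have := LI2 i12 (H2 _ HJp') Hp0; case=> /eqP; rewrite intr_eq0 gt_eqF //.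
have inK : forall x, x \in Jp :|: Jm -> x \in K := fun x hx => subsetP (HK1 K HK).1 x hx.
have HT1 : [set i1; i2; j1] \in Sig.
  apply: (proj1 ((HK2 K HK _).2 _)); exists j2 => //.
  apply/subsetP => y0; rewrite !inE -orbA => /or3P[] /eqP ->; apply/andP; split;
    try apply: inK; rewrite ?EJp ?EJm ?inE ?eqxx ?orbT //.
have HT2 : [set i1; i2; j2] \in Sig.
  apply: (proj1 ((HK2 K HK _).2 _)); exists j1 => //.
  apply/subsetP => y0; rewrite !inE -orbA => /or3P[] /eqP ->; apply/andP; split;
    try apply: inK; rewrite ?EJp ?EJm ?inE ?eqxx ?orbT ?(eq_sym j2) //.
have LIT1 : lin_indep R nu [set i1; i2; j1] by case: Hfan1 => _ H2 _ _; exact: H2.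
have E4 : (- B4) *: n4 = B1 *: n1 + B2 *: n2 + B3 *: n3.
  by apply/eqP; rewrite scaleNr eq_sym -addr_eq0 Erel.
have B4nz : - B4 != 0 by rewrite oppr_eq0 lt_eqF.
have [qa [qb [qc [e1 e2 e3]]]] := sat Hbe Hd1 i12 d11 d21 HT1 hu1 hu2 h3 B4nz E4.
have qap := sign_pos B1p B4n e1.
have qbp := sign_pos B2p B4n e2.
have qcn := sign_neg B3n B4n e3.
have Hn4 : n4 = qa *: n1 + qb *: n2 + qc *: n3.
  apply: (scaleI_int B4nz); rewrite E4 !scalerDr !scalerA e1 e2 e3.
  by rewrite ![_ * - B4]mulrC.
have E3 : (- qc) *: n3 = qa *: n1 + qb *: n2 + (-1) *: n4.
  rewrite Hn4; apply/matrixP => i j; rewrite !mxE; ring.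
have qcnz : - qc != 0 by rewrite oppr_eq0 lt_eqF.
have [_ [_ [q3 [_ _ e3']]]] := sat Hbe Hd1 i12 d12 d22 HT2 hu1 hu2 h4 qcnz E3.
have qc1 := unit_neg qcn e3'.
have Hh : -1 = qa * -1 + qb * -1 + -1 * -1.
  by have := h4; rewrite Hn4 !idotDr !idotZr hu1 hu2 h3 qc1.
have [qa1 qb1] := two_ones qap qbp Hh.
have Hn4' : n4 = n1 + n2 - n3 by rewrite Hn4 qa1 qb1 qc1 !scale1r scaleN1r.
pose w := fun k : 'I_3 => if (k : nat) == 0%N then n1 else if (k : nat) == 1%N then n2 else n3.
have [P [Pu HP]] : exists P : 'M[int]_4, P \in unitmx /\ forall k : 'I_3, w k *m P = std k.
  apply: basis_ext.
    move=> l; rewrite sum_I3 /w /= => E.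
    have [z1 z2 z3] := @LI3_int R _ nu _ _ _ _ _ _ i12 d11 d21 LIT1 E.
    by apply: I3_cases.
  move=> D z l D0; rewrite sum_I3 /w /= => E.
  have [qa' [qb' [qc' [f1 f2 f3]]]] := sat Hbe Hd1 i12 d11 d21 HT1 hu1 hu2 h3 D0 E.
  exists (fun k : 'I_3 => if (k : nat) == 0%N then qa' else if (k : nat) == 1%N then qb' else qc').
  by apply: I3_cases.
exists P; split => //; exists i1, i2, j1, j2; split => //.
- by split; [exact: (HP ord0) | exact: (HP (lift ord0 ord0))].
split; first exact: (HP (lift ord0 (lift ord0 ord0))).
rewrite -/n4 Hn4' mulmxBl mulmxDl.
by rewrite (HP ord0) (HP (lift ord0 ord0)) (HP (lift ord0 (lift ord0 ord0))).
Qed.
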